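(* Let $A$ be an abelian group of Type I or Type II, of order $n$, let $p\in\left[\frac{25(\log n)^2}{n},\,1-\frac{25(\log n)^2}{n}\right]$, and let $S$ be a random inverse-closed subset of $A$ chosen as in the model below. For a subset $S\subseteq A$, call a pair $(C,Z)$ of subgroups of $A$ good for $S$ if: (1) $C$ is cyclic, $Z$ is an elementary abelian $2$-group, and $A=C\times Z$; (2) $|C|\ge 4$; (3) there exist $S'\in\{C,\emptyset,\{0\},C\setminus\{0\}\}$ and $S''\subseteq Z$ with $S=S'\times S''$. Then the probability that there exists a pair $(C,Z)$ good for $S$ is $O\!\left(\exp\!\left(-\frac{25(\log n)^2(n-1)}{2n}\right)\right)$.
   Context: A finite abelian group $A$ is of Type I if $\gcd(|A|,6)=1$, and of Type II if $A\cong \mathbb{Z}_2^r\times N$ for some integer $r\ge 0$ and some abelian group $N$ of odd order which is not cyclic. Random model: given $A$ (written additively) and $0<p<1$, a random subset $S\subseteq A\setminus\{0\}$ is formed as follows: each element $g\in A$ of order exactly $2$ is put into $S$ independently with probability $p$, and for each pair $\{x,-x\}$ with $x\ne -x$, both $x$ and $-x$ are put into $S$ with probability $p$ (and neither otherwise), all these choices being independent. $\log$ denotes $\log_2$. *)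

(* Defs.v *)
From Stdlib Require Import Reals List.
From mathcomp Require Import all_boot all_fingroup.
From mathcomp Require Import abelian gproduct cyclic.

Set Implicit Arguments.
Unset Strict Implicit.
Unset Printing Implicit Defensive.

Local Open Scope R_scope.

(* The abelian group A is the whole carrier of a finGroupType gT (written
   multiplicatively: 0 of the paper is 1, -x is x^-1, S'×S'' is the set product). *)

Definition log2 (x : R) : R := ln x / ln 2.

Definition typeI (gT : finGroupType) : bool := coprime #|gT| 6.

Definition typeII (gT : finGroupType) : bool :=
  [exists E : {group gT}, exists N : {group gT},
     [&& (2.-abelem E)%g, odd #|N|, ~~ cyclic N & (E \x N == [set: gT])%g]].

(* Units of the random model: {x, x^-1} for x <> 1 (a singleton if #[x] = 2). *)
Definition model_units (gT : finGroupType) : {set {set gT}} :=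
  [set [set x; (x^-1)%g] | x in [set~ (1%g : gT)]].

Definition model_weight (gT : finGroupType) (p : R) (S : {set gT}) : R :=
  if (S^-1 == S)%g && ((1%g : gT) \notin S) then
    p ^ #|[set u in model_units gT | u \subset S]| *
    (1 - p) ^ #|[set u in model_units gT | ~~ (u \subset S)]|
  else 0.

Definition model_prob (gT : finGroupType) (p : R) (E : pred {set gT}) : R :=
  fold_right Rplus 0
    (map (fun S => if E S then model_weight p S else 0) (enum [set: {set gT}])).

Definition good_pair (gT : finGroupType) (S : {set gT}) (C Z : {group gT}) : bool :=
  [&& cyclic C, (2.-abelem Z)%g, (C \x Z == [set: gT])%g, (4 <= #|C|)%N &
      [exists S1 : {set gT}, exists S2 : {set gT},
         [&& (S1 \in [:: (C : {set gT}); set0; [set 1%g]; C :\ 1%g]),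
             S2 \subset Z & S == (S1 * S2)%g]]].

Definition has_good_pair (gT : finGroupType) (S : {set gT}) : bool :=
  [exists C : {group gT}, exists Z : {group gT}, good_pair S C Z].

(* Main.v *)
Require Import Defs.
From Stdlib Require Import Reals List Lra.
From mathcomp Require Import all_boot all_fingroup.
From mathcomp Require Import abelian gproduct cyclic.
Set Implicit Arguments. Unset Strict Implicit.
Local Open Scope group_scope.
Lemma odd_in_C (gT : finGroupType) (C Z : {group gT}) (x : gT) :
  2.-abelem Z -> C \x Z = [set: gT] -> odd #[x] -> x \in C.
Proof.
move=> aZ dCZ ox.
case/dprodP: dCZ => _ eCZ cCZ _.
have hx : x = (x ^+ (#[x].+1)./2) ^+ 2.
  rewrite -expgM.
  have -> : ((#[x].+1)./2 * 2 = #[x].+1)%N.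
    by rewrite muln2 even_halfK //= ox.
  by rewrite expgSr expg_order mul1g.
set y := x ^+ _ in hx.
have yin : y \in C * Z by rewrite eCZ inE.
case/mulsgP: yin => c z Cc Zz hy; rewrite hy in hx.
have czc : commute c z by by apply: commute_sym; apply: (centP (subsetP cCZ z Zz)) c Cc.
have /(abelemP (isT : prime 2)) [_ z2] := aZ.
rewrite hx expgMn // (z2 z Zz) mulg1.
exact: groupX.
Qed.

Lemma order_odd (gT : finGroupType) (x : gT) : odd #|gT| -> odd #[x].
Proof.
move=> o; apply: (dvdn_odd (order_dvdG (in_setT x))); by rewrite cardsT.
Qed.

Lemma goodS (gT : finGroupType) (S : {set gT}) :
  typeI gT || typeII gT -> has_good_pair S -> 1 \notin S ->
  S = set0 \/ S = [set~ 1].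
Proof.
move=> tI /existsP [C /existsP [Z]].
case/and5P=> cC aZ /eqP dCZ _ /existsP [S1 /existsP [S2 /and3P [hS1 hS2 /eqP ->]]].
case/orP: tI => [tI | /existsP [E /existsP [N /and4P [_ oN ncN _]]]]; last first.
  exfalso; move/negP: ncN; apply; apply: (cyclicS _ cC).
  apply/subsetP => x Nx; apply: odd_in_C aZ dCZ _.
  exact: dvdn_odd (order_dvdG Nx) oN.
have on : odd #|gT| by rewrite -coprimen2 (coprime_dvdr _ tI).
have CT : (C : {set gT}) = setT.
  apply/eqP; rewrite eqEsubset subsetT /=; apply/subsetP => x _.
  by apply: odd_in_C aZ dCZ (order_odd x on).
have Z1 : S2 \subset [set 1].
  apply/subsetP => z /(subsetP hS2) Zz.
  case/dprodP: dCZ => _ _ _ tCZ.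
  have : z \in C :&: Z by rewrite inE CT inE Zz.
  by rewrite tCZ.
move: hS1; rewrite !inE CT.
move: Z1; rewrite subset1; case/orP=> /eqP ->; last by rewrite mulg0; left.
rewrite mulg1 => hS1 n1.
move: hS1 n1; case/or4P => /eqP ->.
- by rewrite inE.
- by left.
- by rewrite inE eqxx.
- by rewrite setTD; right.
Qed.

Lemma card_bigcup_le (T I : finType) (P : pred I) (F : I -> {set T}) :
  (#|\bigcup_(i | P i) F i| <= \sum_(i | P i) #|F i|)%N.
Proof.
apply: (big_ind2 (fun (A : {set T}) n => #|A| <= n)%N).
- by rewrite cards0.
- move=> A1 n1 A2 n2 h1 h2; apply: leq_trans (leq_card_setU _ _) _.
  exact: leq_add.
- by [].
Qed.

Lemma units_count (gT : finGroupType) :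
  (#|gT|.-1 <= 2 * #|model_units gT|)%N.
Proof.
rewrite -(cardsC1 (1 : gT)).
have sub : [set~ (1 : gT)] \subset \bigcup_(u in model_units gT) u.
  apply/subsetP => x x1; apply/bigcupP; exists [set x; x^-1].
    by apply/imsetP; exists x.
  by rewrite !inE eqxx.
apply: leq_trans (subset_leq_card sub) _.
apply: leq_trans (card_bigcup_le _ _) _.
rewrite mulnC -sum_nat_const; apply: leq_sum => u /imsetP [x _ ->].
by rewrite cards2; case: (_ != _).
Qed.

Lemma cnt (gT : finGroupType) (U : {set {set gT}}) (P : pred {set gT}) :
  {in U, forall u, P u} ->
  #|[set u in U | P u]| = #|U| /\ #|[set u in U | ~~ P u]| = 0%N.
Proof.
move=> h; split.
  rewrite (_ : [set u in U | P u] = U) //; apply/setP => u; rewrite inE; case uU: (u \in U) => //=.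
  by rewrite h.
apply/eqP; rewrite cards_eq0; apply/eqP/setP => u; rewrite !inE.
by case uU: (u \in U) => //=; rewrite h.
Qed.

Lemma unit_mem (gT : finGroupType) u : u \in model_units gT ->
  exists x : gT, [/\ x != 1, x \in u & u \subset [set~ 1]].
Proof.
case/imsetP => x; rewrite !inE => x1 ->; exists x; split => //.
  by rewrite !inE eqxx.
apply/subsetP => y; rewrite !inE => /orP [] /eqP -> //.
by rewrite eq_invg1.
Qed.

Local Open Scope R_scope.

Lemma exp_powR x m : exp x ^ m = exp (x * INR m).
Proof. induction m as [|m IH]. by rewrite /= Rmult_0_r exp_0.
rewrite S_INR -tech_pow_Rmult IH -exp_plus. f_equal; ring. Qed.
Lemma exp_leR x y : x <= y -> exp x <= exp y.
Proof. intros [H|H]. left; apply exp_increasing; auto. subst; lra. Qed.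
Lemma key q r m n : 0 <= q -> q <= r -> r <= 1 -> 0 <= n - 1 <= 2 * INR m ->
  (1 - r) ^ m <= exp (- (q * (n - 1) / 2)).
Proof. intros. apply Rle_trans with (exp (- r) ^ m).
apply pow_incr. split. lra. generalize (exp_ineq1_le (-r)); lra.
rewrite exp_powR. apply exp_leR. assert (0 <= INR m) by apply pos_INR.
assert (q * (n-1) <= r * (2 * INR m)) by (apply Rmult_le_compat; lra). lra. Qed.

Lemma w0 (gT : finGroupType) p : 0 <= p <= 1 ->
  model_weight p (set0 : {set gT}) <= (1 - p) ^ #|model_units gT|.
Proof.
move=> hp; rewrite /model_weight; case: ifP => _; last by apply: pow_le; lra.
have h : {in model_units gT, forall u : {set gT}, ~~ (u \subset (set0 : {set gT}))}.
  move=> u /unit_mem [x [_ xu _]]; apply/negP => /subsetP /(_ x xu); by rewrite inE.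
have [e1 e2] := @cnt gT (model_units gT) (fun u => ~~ (u \subset set0)) h.
have e3 : #|[set u in model_units gT | u \subset (set0 : {set gT})]| = 0%N.
  rewrite -e2; apply: eq_card => u; by rewrite !inE negbK.
rewrite e1 e3 /=; lra.
Qed.

Lemma w1 (gT : finGroupType) p : 0 <= p <= 1 ->
  model_weight p ([set~ 1%g] : {set gT}) <= p ^ #|model_units gT|.
Proof.
move=> hp; rewrite /model_weight; case: ifP => _; last by apply: pow_le; lra.
have h : {in model_units gT, forall u : {set gT}, u \subset ([set~ 1%g] : {set gT})}.
  by move=> u /unit_mem [x [_ _ ?]].
have [e1 e2] := @cnt gT (model_units gT) (fun u => u \subset [set~ 1%g]) h.
rewrite e1 e2 /=; lra.
Qed.

Lemma wge0 (gT : finGroupType) p (S : {set gT}) : 0 <= p <= 1 ->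
  0 <= model_weight p S.
Proof.
move=> hp; rewrite /model_weight; case: ifP => _; last lra.
apply: Rmult_le_pos; apply: pow_le; lra.
Qed.

Lemma fold_le (T : Type) (f g : T -> R) l : (forall x, f x <= g x) ->
  fold_right Rplus 0 (map f l) <= fold_right Rplus 0 (map g l).
Proof. move=> h; elim: l => [|a l IH] /=; first lra. by have := h a; lra. Qed.

Lemma fold_add (T : Type) (f g : T -> R) l :
  fold_right Rplus 0 (map (fun x => f x + g x) l) =
  fold_right Rplus 0 (map f l) + fold_right Rplus 0 (map g l).
Proof. elim: l => [|a l IH] /=; first lra. rewrite IH; ring. Qed.

Lemma fold_ind (T : eqType) (a : T) c l : uniq l ->
  fold_right Rplus 0 (map (fun x => if x == a then c else 0) l) =
  if a \in l then c else 0.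
Proof.
elim: l => [|b l IH] //= /andP [bl ul]; rewrite IH // in_cons.
case: (b =P a) => [eba|nba] /=.
  by subst b; rewrite eqxx (negbTE bl) /=; ring.
have nab : (a == b) = false by apply/eqP => eab; apply: nba; rewrite eab.
by rewrite nab /= Rplus_0_l.
Qed.

Theorem mainTheorem4 :
  exists (K : R) (n0 : nat), 0 < K /\
  forall (gT : finGroupType) (p : R),
    abelian [set: gT] ->
    typeI gT || typeII gT ->
    (n0 <= #|gT|)%N ->
    let n := INR #|gT| in
    25 * (log2 n) ^ 2 / n <= p ->
    p <= 1 - 25 * (log2 n) ^ 2 / n ->
    0 < p < 1 ->
    model_prob p (@has_good_pair gT)
      <= K * exp (- (25 * (log2 n) ^ 2 * (n - 1) / (2 * n))).
Proof.
exists 2, 0%N; split; first lra.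
move=> gT p _ tI _ n hp1 hp2 hp.
have hp' : 0 <= p <= 1 by lra.
set m := #|model_units gT|.
set a := (1 - p) ^ m; set b := p ^ m.
have ha : 0 <= a by apply: pow_le; lra.
have hb : 0 <= b by apply: pow_le; lra.
have le1 : model_prob p (@has_good_pair gT) <= a + b.
  rewrite /model_prob.
  apply: Rle_trans (fold_le (g := fun S : {set gT} =>
     (if S == set0 then a else 0) + (if S == [set~ 1%g] then b else 0)) _ _) _.
    move=> S; case: ifP => hS; last by case: ifP; case: ifP; lra.
    case: (boolP ((1%g : gT) \in S)) => n1.
      rewrite /model_weight n1 andbF; case: ifP; case: ifP; lra.
    case: (goodS tI hS n1) => ->.
      rewrite eqxx; have := w0 gT hp'; rewrite -/m -/a => h0; have := wge0 (set0 : {set gT}) hp'; case: ifP => _ h1; lra.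
    rewrite eqxx; have := w1 gT hp'; rewrite -/m -/b => h0; have := wge0 ([set~ 1%g] : {set gT}) hp'; case: ifP => _ h1; lra.
  rewrite fold_add !fold_ind ?enum_uniq // !mem_enum !inE; lra.
have hn1 : (1 <= #|gT|)%N by apply/card_gt0P; exists 1%g.
have hnpos : 0 < n by rewrite /n; apply: lt_0_INR; apply/ltP.
have hm : 0 <= n - 1 <= 2 * INR m.
  have := units_count gT; rewrite -/m => /leP h.
  have h2 : INR #|gT|.-1 <= INR 2 * INR m by rewrite -mult_INR; apply: le_INR.
  have e2 : INR 2 = 2 by rewrite S_INR INR_1; lra.
  have e3 : n = INR (#|gT|.-1) + 1 by rewrite /n -S_INR prednK.
  rewrite e2 in h2; have := pos_INR #|gT|.-1; lra.
set q := 25 * log2 n ^ 2 / n.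
have hq : 0 <= q.
  rewrite /q; apply: Rmult_le_pos; last by apply: Rlt_le; apply: Rinv_0_lt_compat.
  apply: Rmult_le_pos; [lra | apply: pow2_ge_0].
have -> : 25 * log2 n ^ 2 * (n - 1) / (2 * n) = q * (n - 1) / 2.
  by rewrite /q; field; lra.
have k1 := key hq hp1 (Rlt_le _ _ (proj2 hp)) hm.
have hq2 : q <= 1 - p by rewrite /q; lra.
have hq3 : 1 - p <= 1 by lra.
have k2 := key hq hq2 hq3 hm.
rewrite (_ : 1 - (1 - p) = p) in k2; last by ring.
rewrite -/a in k1; rewrite -/b in k2; lra.
Qed.
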